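(* Let $m,n,k\in\mathbb{N}$ and $\delta\le 0$. Then \[ \sum_{i=0}^{n}(-1)^{i}\binom{n}{i}\frac{(k)_i}{(m+n)_i}\,\frac{\prod_{j=k-1}^{k+i-2}(1-j\delta)}{\prod_{j=m}^{m+i-1}(1-j\delta)} =\frac{(m+n-k)_n\prod_{j=m+k}^{m+n+k-1}(1-j\delta)}{(m+n)_n\prod_{j=m}^{m+n-1}(1-j\delta)}. \]
   Context: For $x\in\mathbb{R}$ and $k\in\mathbb{N}$, $(x)_k=x(x-1)\cdots(x-k+1)$ with $(x)_0=1$. Empty products equal $1$. *)

(* Defs.v *)
From HB Require Import structures.
From mathcomp Require Import all_boot all_order all_algebra.
Set Implicit Arguments. Unset Strict Implicit. Unset Printing Implicit Defensive.
Import Order.TTheory GRing.Theory Num.Theory.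
Local Open Scope ring_scope.

Definition falling {R : nzRingType} (x : R) (k : nat) : R :=
  \prod_(t < k) (x - t%:R).

Definition iprod {R : nzRingType} (a b : int) (F : int -> R) : R :=
  if (b < a)%R then 1 else \prod_(t < absz (b - a + 1)%R) F (a + t%:Z)%R.

(* Main.v *)
Require Import Defs.
From HB Require Import structures.
From mathcomp Require Import all_boot all_order all_algebra.
From mathcomp Require Import ring lra zify.
Import Order.TTheory GRing.Theory Num.Theory.
Local Open Scope ring_scope.

Lemma iprod_len (R : nzRingType) (a : int) (i : nat) (F : int -> R) :
  iprod a (a + i%:Z - 1) F = \prod_(t < i) F (a + t%:Z).
Proof.
rewrite /iprod; case: i => [|j].
  by rewrite big_ord0 ifT // addr0 ltrBlDr ltrDl.
rewrite ifF; last first.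
  by apply/negbTE; rewrite -leNgt -addrA lerDl -addn1 PoszD addrK.
have -> : (a + j.+1%:Z - 1 - a + 1) = j.+1%:Z by rewrite -addn1 PoszD; ring.
by [].
Qed.

Lemma fallingS (R : nzRingType) (x : R) j : falling x j.+1 = falling x j * (x - j%:R).
Proof. by rewrite /falling big_ord_recr. Qed.

Lemma fallingSl (R : comNzRingType) (x : R) j : falling (x + 1) j.+1 = (x + 1) * falling x j.
Proof.
rewrite /falling big_ord_recl subr0; congr (_ * _); apply: eq_bigr => t _.
rewrite /= /bump /= add1n -addn1 natrD; ring.
Qed.

Definition P {R : realFieldType} (d x : R) := 1 - x * d.
Definition Aa {R : realFieldType} (d : R) (k i : nat) := \prod_(t < i) P d (k%:R - 1 + t%:R).
Definition Bb {R : realFieldType} (d : R) (m i : nat) := \prod_(t < i) P d (m%:R + t%:R).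
Definition Tt {R : realFieldType} (d : R) (m k n i : nat) :=
  (-1) ^+ i * ('C(n, i))%:R * (falling (k%:R : R) i / falling ((m + n)%:R : R) i)
   * (Aa d k i / Bb d m i).
Definition Hh {R : realFieldType} (d : R) (m k n i : nat) :=
  match i with 0 => 0 | j.+1 =>
   (-1) ^+ j * ('C(n, j))%:R * falling (k%:R : R) j.+1 * Aa d k j.+1
     / (falling ((m + n)%:R : R) j * Bb d m j) end.

Lemma AaS (R : realFieldType) (d : R) k j : Aa d k j.+1 = Aa d k j * P d (k%:R - 1 + j%:R).
Proof. by rewrite /Aa big_ord_recr. Qed.
Lemma BbS (R : realFieldType) (d : R) m j : Bb d m j.+1 = Bb d m j * P d (m%:R + j%:R).
Proof. by rewrite /Bb big_ord_recr. Qed.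

Lemma P_gt0 (R : realFieldType) (d x : R) : d <= 0 -> 0 <= x -> 0 < P d x.
Proof. move=> hd hx; have := mulr_ge0_le0 hx hd; rewrite /P; lra. Qed.

Lemma Bb_gt0 (R : realFieldType) (d : R) m j : d <= 0 -> 0 < Bb d m j.
Proof. by move=> hd; apply: prodr_gt0 => t _; apply: P_gt0; rewrite // -natrD ler0n. Qed.

Lemma falling_gt0 (R : realFieldType) (N j : nat) : (j <= N)%N -> 0 < falling (N%:R : R) j.
Proof.
move=> hj; apply: prodr_gt0 => t _; rewrite subr_gt0 ltr_nat.
exact: leq_trans (ltn_ord t) hj.
Qed.

Lemma alg (R : fieldType) (M N J K d s c fk a fN bB : R) :
  fN != 0 -> bB != 0 -> 1 - (M + J) * d != 0 -> N - J != 0 -> M + N - J != 0 -> M + N + 1 != 0 ->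
  (M + N + 1) * (1 - (M + N) * d) *
  (-1 * s * (c + (J + 1) * c / (N - J)) *
   (fk * (K - J) / ((M + N + 1) * fN)) *
   (a * (1 - (K - 1 + J) * d) / (bB * (1 - (M + J) * d)))) -
  (M + N + 1 - K) * (1 - (M + N + K) * d) *
  (-1 * s * c *
   (fk * (K - J) / (fN * (M + N - J))) *
   (a * (1 - (K - 1 + J) * d) / (bB * (1 - (M + J) * d)))) =
  -1 * s * c *
  (fk * (K - J) * (K - (J + 1))) *
  (a * (1 - (K - 1 + J) * d) * (1 - (K - 1 + (J + 1)) * d)) /
  (fN * (M + N - J) * (bB * (1 - (M + J) * d))) -
  s * ((J + 1) * c / (N - J)) *
  (fk * (K - J)) * (a * (1 - (K - 1 + J) * d)) /
  (fN * bB).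
Proof. move=> h1 h2 h3 h4 h5 h6; field; by rewrite h1 h2 h3 h4 h5 h6. Qed.

Lemma step_term (R : realFieldType) (d : R) m k n i : d <= 0 -> (i <= n)%N ->
  ((m + n)%:R + 1) * P d (m + n)%:R * Tt d m k n.+1 i
  - ((m + n)%:R + 1 - k%:R) * P d ((m + n)%:R + k%:R) * Tt d m k n i
  = Hh d m k n i.+1 - Hh d m k n i.
Proof.
move=> hd hi; case: i hi => [|j] hj.
  rewrite /Tt /Hh /Aa /Bb /falling !big_ord_recr !big_ord0 /= !bin0 /P !natrD.
  by rewrite !expr0; field.
have hF := @falling_gt0 R (m + n) j (leq_trans (ltnW hj) (leq_addl m n)).
have hB := @Bb_gt0 R d m j hd.
have hPm : 0 < P d (m%:R + j%:R) by apply: P_gt0; rewrite // -natrD ler0n.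
have hc : ('C(n, j))%:R * (n%:R - j%:R) = (j%:R + 1) * ('C(n, j.+1))%:R :> R.
  rewrite -natrB 1?ltnW // -natrM mulnC -mul_bin_left natrM.
  by rewrite -addn1 natrD.
have hnj : (n%:R - j%:R : R) != 0 by rewrite -natrB 1?ltnW // pnatr_eq0 subn_eq0 -ltnNge.
rewrite /Tt /Hh addnS binS.
have -> : ((m + n).+1)%:R = (m + n)%:R + 1 :> R by rewrite -addn1 natrD.
rewrite fallingSl !fallingS !AaS !BbS !natrD.
have -> : ('C(n, j))%:R = (j%:R + 1) * ('C(n, j.+1))%:R / (n%:R - j%:R) :> R.
  by rewrite -hc mulfK.
rewrite !exprS.
have e : (j.+1%:R : R) = j%:R + 1 by rewrite -addn1 natrD.
rewrite e; apply: alg.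
- by apply: lt0r_neq0; rewrite -natrD.
- exact: lt0r_neq0.
- exact: lt0r_neq0.
- exact: hnj.
- have hjmn : (j < m + n)%N by lia.
  by rewrite -natrD -natrB ?pnatr_eq0 ?subn_eq0 -?ltnNge // ltnW.
- apply: lt0r_neq0; have := ler0n R (m + n); rewrite natrD => h; lra.
Qed.

Lemma last_term (R : realFieldType) (d : R) m k n : d <= 0 ->
  ((m + n)%:R + 1) * P d (m + n)%:R * Tt d m k n.+1 n.+1 = - Hh d m k n n.+1.
Proof.
move=> hd.
have hF := @falling_gt0 R (m + n) n (leq_addl m n).
have hB := @Bb_gt0 R d m n hd.
have hPm : 0 < P d (m%:R + n%:R) by apply: P_gt0; rewrite // -natrD ler0n.
have hN : 0 < (m + n)%:R + 1 :> R by have := ler0n R (m + n); lra.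
rewrite /Tt /Hh !binn addnS.
have -> : ((m + n).+1)%:R = (m + n)%:R + 1 :> R by rewrite -addn1 natrD.
rewrite fallingSl BbS exprS.
move: hF hB hPm hN; rewrite !natrD.
set fk := falling _ n.+1; set a := Aa _ _ _; set fN := falling _ n; set bB := Bb _ _ _.
move=> hF hB hPm hN.
field; by rewrite ?lt0r_neq0.
Qed.

Definition S {R : realFieldType} (d : R) m k n := \sum_(0 <= i < n.+1) Tt d m k n i.

Lemma S_rec (R : realFieldType) (d : R) m k n : d <= 0 ->
  ((m + n)%:R + 1) * P d (m + n)%:R * S d m k n.+1
  = ((m + n)%:R + 1 - k%:R) * P d ((m + n)%:R + k%:R) * S d m k n.
Proof.
move=> hd.
have h1 : \sum_(0 <= i < n.+1)
   (((m + n)%:R + 1) * P d (m + n)%:R * Tt d m k n.+1 i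
    - ((m + n)%:R + 1 - k%:R) * P d ((m + n)%:R + k%:R) * Tt d m k n i)
   = Hh d m k n n.+1.
  rewrite (telescope_sumr_eq (Hh d m k n)) ?subr0 // => i /andP [_ hi].
  by rewrite step_term.
rewrite sumrB -!mulr_sumr in h1.
rewrite /S big_nat_recr //= mulrDr last_term //.
rewrite -[X in X + _ = _](subrK (((m + n)%:R + 1 - k%:R) * P d ((m + n)%:R + k%:R) *
   \sum_(0 <= i < n.+1) Tt d m k n i)) h1.
by rewrite addrAC addrN add0r.
Qed.

Definition Cp {R : realFieldType} (d : R) (m k n : nat) := \prod_(t < n) P d (m%:R + k%:R + t%:R).

Lemma S_closed (R : realFieldType) (d : R) m k n : d <= 0 ->
  S d m k n = falling ((m + n)%:R - k%:R : R) n * Cp d m k n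
              / (falling ((m + n)%:R : R) n * Bb d m n).
Proof.
move=> hd; elim: n => [|n IH].
  rewrite /S big_nat1 /Tt /Cp /Bb /Aa /falling !big_ord0 bin0 expr0.
  by rewrite !(mul1r, mulr1, invr1, divr1).
have hF := @falling_gt0 R (m + n) n (leq_addl m n).
have hB := @Bb_gt0 R d m n hd.
have hPm : 0 < P d (m%:R + n%:R) by apply: P_gt0; rewrite // -natrD ler0n.
have hN : 0 < (m + n)%:R + 1 :> R by have := ler0n R (m + n); lra.
have hS := @S_rec R d m k n hd.
have -> : S d m k n.+1 = ((m + n)%:R + 1 - k%:R) * P d ((m + n)%:R + k%:R) * S d m k n
     / (((m + n)%:R + 1) * P d (m + n)%:R).
  by rewrite -hS mulrC mulKf // mulf_neq0 ?lt0r_neq0 // natrD.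
rewrite IH addnS.
have -> : ((m + n).+1)%:R = (m + n)%:R + 1 :> R by rewrite -addn1 natrD.
have -> : (m + n)%:R + 1 - k%:R = ((m + n)%:R - k%:R) + 1 :> R by ring.
rewrite !fallingSl /Cp big_ord_recr /= -/(Cp d m k n) BbS.
move: hF hB hPm hN; rewrite !natrD.
set fk := falling _ n; set cp := Cp _ _ _ _; set fN := falling _ n; set bB := Bb _ _ _.
move=> hF hB hPm hN.
rewrite /P in hPm *.
field; by rewrite ?lt0r_neq0.
Qed.

Theorem lemmaC1 (R : realFieldType) (m n k : nat) (delta : R) (hdelta : delta <= 0) :
  \sum_(0 <= i < n.+1)
     (-1) ^+ i * ('C(n, i))%:R
       * (falling (k%:R : R) i / falling ((m + n)%:R : R) i)
       * (iprod (k%:Z - 1) (k%:Z + i%:Z - 2) (fun j => 1 - j%:~R * delta)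
          / iprod m%:Z (m%:Z + i%:Z - 1) (fun j => 1 - j%:~R * delta))
  = falling ((m + n)%:R - k%:R : R) n
       * iprod (m%:Z + k%:Z) (m%:Z + n%:Z + k%:Z - 1) (fun j => 1 - j%:~R * delta)
    / (falling ((m + n)%:R : R) n
       * iprod m%:Z (m%:Z + n%:Z - 1) (fun j => 1 - j%:~R * delta)).
Proof.
have eB : forall i : nat, iprod m%:Z (m%:Z + i%:Z - 1) (fun j => 1 - j%:~R * delta)
    = Bb delta m i.
  move=> i; rewrite iprod_len /Bb; apply: eq_bigr => t _.
  by rewrite /P intrD.
have -> : (m%:Z + n%:Z + k%:Z - 1) = (m%:Z + k%:Z) + n%:Z - 1 by ring.
rewrite iprod_len eB.
have -> : \prod_(t < n) (fun j : int => 1 - j%:~R * delta) (m%:Z + k%:Z + t%:Z)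
    = Cp delta m k n.
  by apply: eq_bigr => t _; rewrite /P !intrD.
rewrite -S_closed // /S; apply: eq_bigr => i _; rewrite /Tt eB.
have -> : k%:Z + i%:Z - 2 = (k%:Z - 1) + i%:Z - 1 by ring.
rewrite iprod_len; congr (_ * (_ / _)); apply: eq_bigr => t _.
by rewrite /P !intrD.
Qed.
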